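(* Let $k\ge1$ be an integer. For the class of $k$-well-structured instances of one-sided matching (with unrestricted nonnegative valuations), the algorithm $k$-FMM makes $k$ value queries per agent and has distortion $O(k\cdot n^{1/k})$.
   Context: One-sided matching: there is a set $N$ of $n$ agents and a set $A$ of $n$ items. Each agent $i$ has a valuation function $v_i:A\to\mathbb{R}_{\ge0}$. Agents report strict rankings $\succ_i$ consistent with their values (if $a\succ_i b$ then $v_i(a)\ge v_i(b)$). Value queries return $v_i(j)$. A matching is a bijection $N\to A$ with welfare $\mathrm{SW}(Y\mid\mathbf v)=\sum_i v_i(y_i)$. The distortion of an algorithm on a class of instances is the supremum over instances in the class of optimal welfare divided by the welfare of the algorithm's output. $k$-well-structured ($k$-WS) instance: fix a constant $\varepsilon\in(0,1)$. The items are partitioned into $A_1,\dots,A_{k+1}$ with $|A_1|=1$ and $|A_\ell|=\varepsilon n^{(\ell-1)/k}$ for $\ell=2,\dots,k$ (assumed integers), and $A_{k+1}$ the remaining items. Every agent ranks all items of $A_\ell$ above all items of $A_{\ell+1}$ for each $\ell$. The order within each $A_\ell$ may differ across agents. The partition is known to the algorithm. Algorithm $k$-FMM: for each $\ell=1,\dots,k$ and each agent $i$, query $i$'s value $u_i(\ell)$ for her least-preferred item in $A_\ell$. Define $\tilde v_i(j)=u_i(\ell)$ for $j\in A_\ell$ with $\ell\le k$, and $\tilde v_i(j)=0$ for $j\in A_{k+1}$. Output a matching maximizing $\sum_i\tilde v_i(y_i)$. *)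

(* Defs.v *)
From HB Require Import structures.
From mathcomp Require Import all_boot all_order all_algebra.
From mathcomp Require Import fingroup perm reals exp.
Set Implicit Arguments. Unset Strict Implicit. Unset Printing Implicit Defensive.
Import Order.TTheory GRing.Theory Num.Theory.
Local Open Scope ring_scope.

(* Agents and items are both 'I_n.  A valuation profile is v : 'I_n -> 'I_n -> R
   (v i j = value of agent i for item j).  A matching is a bijection agents -> items,
   i.e. a permutation Y : {perm 'I_n}; agent i gets item Y i. *)

Section Defs.
Variable R : realType.
Variable n : nat.

Definition SW (v : 'I_n -> 'I_n -> R) (Y : {perm 'I_n}) : R :=
  \sum_(i < n) v i (Y i).

(* A strict ranking of agent i is given by a position function rk : {perm 'I_n};
   a >_i b  iff  rk a < rk b  (smaller position = more preferred). *)
Definition prefers (rk : {perm 'I_n}) (a b : 'I_n) : bool := (rk a < rk b)%N.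

Definition consistent (rk : {perm 'I_n}) (w : 'I_n -> R) : Prop :=
  forall a b, prefers rk a b -> w b <= w a.

Definition least_pref (rk : {perm 'I_n}) (P : pred 'I_n) : option 'I_n :=
  [pick j | P j & [forall j', P j' ==> (rk j' <= rk j)%N]].

Variable k : nat.

(* The partition A_1, ..., A_{k+1} is encoded by part : 'I_n -> 'I_k.+1,
   item j lies in A_{part j + 1}  (so index 0 is A_1 and index k is A_{k+1}). *)

Definition k_WS (eps : R) (part : 'I_n -> 'I_k.+1)
    (rk : 'I_n -> {perm 'I_n}) : Prop :=
  [/\ #|[set j | part j == ord0]| = 1%N,
      (forall l : 'I_k.+1, (0 < l < k)%N ->
         (#|[set j | part j == l]|)%:R = eps * powR (n%:R) (l%:R / k%:R))
    & (forall i a b, (part a < part b)%N -> prefers (rk i) a b)].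

(* k-FMM: query u_i(l) = value of agent i for her least-preferred item of A_l,
   l = 1..k (index l-1 = 0..k-1).  That is exactly k value queries per agent. *)
Definition FMM_query (v : 'I_n -> 'I_n -> R) (part : 'I_n -> 'I_k.+1)
    (rk : 'I_n -> {perm 'I_n}) (i : 'I_n) (l : 'I_k.+1) : R :=
  if least_pref (rk i) (fun j => part j == l) is Some j then v i j else 0.

Definition FMM_proxy (v : 'I_n -> 'I_n -> R) (part : 'I_n -> 'I_k.+1)
    (rk : 'I_n -> {perm 'I_n}) (i j : 'I_n) : R :=
  if (part j < k)%N then FMM_query v part rk i (part j) else 0.

(* Y is a possible output of k-FMM: a matching maximizing the proxy welfare
   (any tie-breaking). *)
Definition FMM_output (v : 'I_n -> 'I_n -> R) (part : 'I_n -> 'I_k.+1)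
    (rk : 'I_n -> {perm 'I_n}) (Y : {perm 'I_n}) : Prop :=
  forall Y' : {perm 'I_n}, SW (FMM_proxy v part rk) Y' <= SW (FMM_proxy v part rk) Y.

End Defs.

(* Main.v *)
Require Import Defs.
From HB Require Import structures.
From mathcomp Require Import all_boot all_order all_algebra.
From mathcomp Require Import fingroup perm reals exp.
From mathcomp Require Import ring lra zify.
Set Implicit Arguments. Unset Strict Implicit. Unset Printing Implicit Defensive.
Import Order.TTheory GRing.Theory Num.Theory.
Local Open Scope ring_scope.


Lemma least_pref_ex (n : nat) (rk : {perm 'I_n}) (P : pred 'I_n) j0 :
  P j0 -> exists js, [/\ least_pref rk P = Some js, P js &
     forall j', P j' -> (rk j' <= rk js)%N].
Proof.
move=> Pj0; rewrite /least_pref.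
case: pickP => [js /andP[Pjs /forallP H] | Hn].
  by exists js; split => // j' Pj'; have := H j'; rewrite Pj'.
exfalso.
have [j Pj Hmax] := arg_maxnP (fun j => rk j) Pj0.
have := Hn j; rewrite Pj /=.
move/negbT/negP; apply; apply/forallP => j'; apply/implyP => Pj'.
exact: Hmax.
Qed.

Lemma proxy_le_v (R : realType) n k (v : 'I_n -> 'I_n -> R) part rk i j :
  (forall i j, 0 <= v i j) -> (forall i, consistent (rk i) (v i)) ->
  @FMM_proxy R n k v part rk i j <= v i j.
Proof.
move=> v0 cons; rewrite /FMM_proxy /FMM_query.
case: ifP => // _.
have [js [-> /eqP Pjs Hm]] := @least_pref_ex n (rk i) (fun j' => part j' == part j) j (eqxx _).
have := Hm j (eqxx _); rewrite leq_eqVlt => /orP[/eqP e|lt].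
  by rewrite (@perm_inj _ (rk i) _ _ (val_inj e)).
exact: cons.
Qed.

Lemma proxy_ge0 (R : realType) n k (v : 'I_n -> 'I_n -> R) part rk i j :
  (forall i j, 0 <= v i j) -> 0 <= @FMM_proxy R n k v part rk i j.
Proof.
move=> v0; rewrite /FMM_proxy /FMM_query.
case: ifP => // _; by case: least_pref.
Qed.

Lemma SW_swap (R : realType) n (w : 'I_n -> 'I_n -> R) (Y : {perm 'I_n}) i i' :
  i != i' ->
  SW w ((Y * tperm (Y i) (Y i'))%g) + w i (Y i) + w i' (Y i') =
  SW w Y + w i (Y i') + w i' (Y i).
Proof.
move=> nii; rewrite /SW (bigD1 i) //= (bigD1 i') //=.
rewrite [in RHS](bigD1 i) //= [in RHS](bigD1 i') //=.
rewrite !permM tpermL tpermR.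
have -> : \sum_(x < n | (x != i) && (x != i')) w x (((Y * tperm (Y i) (Y i'))%g) x)
  = \sum_(x < n | (x != i) && (x != i')) w x (Y x).
  apply: eq_bigr => x /andP[xi xi']; rewrite permM tpermD //.
    by rewrite eq_sym (inj_eq perm_inj).
  by rewrite eq_sym (inj_eq perm_inj).
  lra. all: by rewrite eq_sym.
Qed.


Lemma swap_le (R : realType) n (w : 'I_n -> 'I_n -> R) (Y : {perm 'I_n}) i j :
  (forall i j, 0 <= w i j) -> (forall Y', SW w Y' <= SW w Y) ->
  w i j <= w i (Y i) + w ((Y^-1)%g j) j.
Proof.
move=> w0 opt.
set i' := (Y^-1)%g j.
have Yi' : Y i' = j by rewrite /i' permKV.
case: (eqVneq i i') => [<-|nii].
  rewrite -Yi'; have := w0 i (Y i); lra.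
have := SW_swap w Y nii; have := opt ((Y * tperm (Y i) (Y i'))%g).
rewrite Yi'; have := w0 i' (Y i); lra.
Qed.

Lemma key_le (R : realType) n (w : 'I_n -> 'I_n -> R) (Y : {perm 'I_n}) i
   (A : {set 'I_n}) c :
  (forall i j, 0 <= w i j) -> (forall Y', SW w Y' <= SW w Y) ->
  (forall j, j \in A -> w i j = c) ->
  (#|A|%:R * c <= #|A|%:R * w i (Y i) + SW w Y).
Proof.
move=> w0 opt Ac.
have -> : SW w Y = \sum_j w ((Y^-1)%g j) j.
  rewrite /SW (reindex_inj (h := (Y^-1)%g) (@perm_inj _ _)) /=.
  by apply: eq_bigr => j _; rewrite permKV.
rewrite !mulr_natl -!sumr_const.
apply: (@le_trans _ _ (\sum_(j in A) w i (Y i) + \sum_(j in A) w ((Y^-1)%g j) j)).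
  rewrite -big_split /=.
  apply: ler_sum => j Aj; rewrite -(Ac j Aj); exact: swap_le.
rewrite lerD2l [X in _ <= X](bigID (fun j => j \in A)) /= lerDl.
by apply: sumr_ge0 => j _; exact: w0.
Qed.


Definition cnt n k (part : 'I_n -> 'I_k.+1) (l : 'I_k.+1) : nat :=
  #|[set j | part j == l]|.

Lemma n_pos (R : realType) (eps : R) n k (part : 'I_n -> 'I_k.+1) (rk : 'I_n -> {perm 'I_n}) :
  k_WS eps part rk -> (0 < n)%N.
Proof.
case=> H0 _ _; have := max_card (mem [set j | part j == ord0]).
by rewrite H0 card_ord.
Qed.

Lemma cnt_lb (R : realType) (eps : R) n k part (rk : 'I_n -> {perm 'I_n}) (l : 'I_k.+1) :
  0 < eps < 1 -> k_WS eps part rk -> (l < k)%N ->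
  eps * powR (n%:R) (l%:R / k%:R) <= (cnt part l)%:R.
Proof.
move=> /andP[e0 e1] [H0 Hmid _] lk.
case: (posnP l) => [l0|lpos].
  have -> : l = ord0 by apply: val_inj.
  rewrite /cnt H0 /= mul0r powRr0; lra.
by rewrite /cnt Hmid ?lpos ?lk.
Qed.

Lemma cnt_ub (R : realType) (eps : R) n k part (rk : 'I_n -> {perm 'I_n}) (l : 'I_k.+1) :
  0 < eps < 1 -> (1 <= k)%N -> k_WS eps part rk ->
  (cnt part l)%:R <= powR (n%:R : R) (l%:R / k%:R).
Proof.
move=> /andP[e0 e1] k1 [H0 Hmid _].
case: (posnP l) => [l0|lpos].
  have -> : l = ord0 by apply: val_inj.
  by rewrite /cnt H0 /= mul0r powRr0.
have := ltn_ord l; rewrite ltnS leq_eqVlt => /orP[/eqP lk|lk].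
  rewrite lk divff ?powRr1 ?ler0n //; last by rewrite pnatr_eq0 -lt0n.
  by rewrite ler_nat /cnt -[X in (_ <= X)%N](card_ord n) max_card.
rewrite /cnt Hmid ?lpos ?lk //.
have := powR_ge0 (n%:R : R) (l%:R / k%:R); nra.
Qed.

Lemma cnt_ratio (R : realType) (eps : R) n k part (rk : 'I_n -> {perm 'I_n}) (l : 'I_k.+1) :
  0 < eps < 1 -> (1 <= k)%N -> k_WS eps part rk -> (0 < l)%N ->
  eps * (cnt part l)%:R <=
    powR (n%:R : R) (k%:R^-1) * (cnt part (inord l.-1))%:R.
Proof.
move=> he k1 hWS lpos.
have hg : ((inord l.-1 : 'I_k.+1) : nat) = l.-1.
  by rewrite inordK // (leq_ltn_trans (leq_pred _) (ltn_ord l)).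
have glk : ((inord l.-1 : 'I_k.+1) < k)%N.
  rewrite hg -ltnS prednK //; exact: ltn_ord.
have lb := cnt_lb he hWS glk; rewrite hg in lb.
have ub := @cnt_ub R eps n k part rk l he k1 hWS.
have e : (l%:R / k%:R : R) = l.-1%:R / k%:R + k%:R^-1.
  by rewrite -{1}(prednK lpos) -natr1 mulrDl mul1r.
have hn0 : (n%:R : R) != 0 by rewrite pnatr_eq0 -lt0n (n_pos hWS).
rewrite e powRD ?hn0 ?implybT // in ub.
move: he => /andP[e0 e1].
have := powR_ge0 (n%:R : R) (k%:R^-1).
have := powR_ge0 (n%:R : R) (l.-1%:R / k%:R).
set N := powR _ (k%:R^-1) in ub *.
set P := powR _ (l.-1%:R / _) in ub lb *.
nra.
Qed.

Lemma agent_bound (R : realType) (eps : R) n k (part : 'I_n -> 'I_k.+1)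
   (rk : 'I_n -> {perm 'I_n}) (v : 'I_n -> 'I_n -> R) (Y : {perm 'I_n}) a j :
  0 < eps < 1 -> (1 <= k)%N -> (forall i j, 0 <= v i j) ->
  (forall i, consistent (rk i) (v i)) -> k_WS eps part rk ->
  FMM_output v part rk Y ->
  (cnt part (inord (part j).-1))%:R * v a j <=
  (cnt part (inord (part j).-1))%:R * FMM_proxy v part rk a (Y a)
     + SW (FMM_proxy v part rk) Y.
Proof.
move=> he k1 v0 cons hWS opt.
set g : 'I_k.+1 := inord (part j).-1.
have hg : (g : nat) = (part j).-1.
  by rewrite inordK // (leq_ltn_trans (leq_pred _) (ltn_ord _)).
have glk : (g < k)%N.
  rewrite hg; have := ltn_ord (part j); lia.
have [e0 e1] := andP he.
have hn0 : (0 < n)%N := n_pos hWS.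
have cpos : (0 < cnt part g)%N.
  have := cnt_lb he hWS glk.
  have : 0 < powR (n%:R : R) (g%:R / k%:R) by apply: powR_gt0; rewrite ltr0n.
  move=> p0 lb; rewrite -(ltr0n R); apply: lt_le_trans lb; exact: mulr_gt0.
have [j0 j0in] : exists j0, j0 \in [set j | part j == g].
  by apply/set0Pn; rewrite -card_gt0.
have Pj0 : part j0 == g by move: j0in; rewrite inE.
have [js [LP /eqP Pjs Hm]] := @least_pref_ex n (rk a) (fun j' => part j' == g) j0 Pj0.
have vle : v a j <= v a js.
  case: (posnP (part j)) => [pj0|pjpos].
    have gz : g = ord0 by apply: val_inj; rewrite /= hg pj0.
    case: hWS => H0 _ _.
    have /cards1P [x hx] : #|[set j | part j == g]| == 1%N by rewrite gz H0.
    have : j \in [set j | part j == g] by rewrite inE gz; apply/eqP/val_inj.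
    have : js \in [set j | part j == g] by rewrite inE Pjs.
    by rewrite hx !inE => /eqP -> /eqP ->.
  case: hWS => _ _ Hord; apply: cons; apply: Hord.
  by rewrite Pjs hg; lia.
have key := @key_le R n (FMM_proxy v part rk) Y a [set j | part j == g] (v a js)
  (fun i j => proxy_ge0 part rk i j v0) opt.
have hc : forall j', j' \in [set j | part j == g] -> FMM_proxy v part rk a j' = v a js.
  move=> j'; rewrite inE => /eqP pj'.
  by rewrite /FMM_proxy pj' glk /FMM_query LP.
have := key hc.
rewrite -/(cnt part g) => H.
apply: le_trans H; apply: ler_wpM2l => //; exact: ler0n.
Qed.


Lemma cnt_pos (R : realType) (eps : R) n k (part : 'I_n -> 'I_k.+1)
   (rk : 'I_n -> {perm 'I_n}) (l : 'I_k.+1) :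
  0 < eps < 1 -> k_WS eps part rk -> (l < k)%N -> (0 < cnt part l)%N.
Proof.
move=> he hWS glk; have [e0 e1] := andP he.
have hn0 : (0 < n)%N := n_pos hWS.
have := cnt_lb he hWS glk.
have : 0 < powR (n%:R : R) (l%:R / k%:R) by apply: powR_gt0; rewrite ltr0n.
move=> p0 lb; rewrite -(ltr0n R); apply: lt_le_trans lb; exact: mulr_gt0.
Qed.

Lemma inord_pred_lt k (l : 'I_k.+1) : (1 <= k)%N ->
  (((inord l.-1) : 'I_k.+1) : nat) = l.-1 /\ (((inord l.-1) : 'I_k.+1) < k)%N.
Proof.
move=> k1; have := ltn_ord l => hl.
rewrite inordK; last by lia.
split => //; lia.
Qed.

Lemma sum_bound (R : realType) (eps : R) n k (part : 'I_n -> 'I_k.+1)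
   (rk : 'I_n -> {perm 'I_n}) :
  0 < eps < 1 -> (1 <= k)%N -> k_WS eps part rk ->
  \sum_j ((cnt part (inord (part j).-1))%:R : R)^-1 <=
     1 + k%:R * (powR (n%:R : R) (k%:R^-1) / eps).
Proof.
move=> he k1 hWS; have [e0 e1] := andP he.
rewrite (partition_big part xpredT) //=.
have -> : \sum_(L < k.+1) \sum_(j | part j == L) ((cnt part (inord (part j).-1))%:R : R)^-1
   = \sum_(L < k.+1) (cnt part L)%:R * ((cnt part (inord L.-1))%:R)^-1.
  apply: eq_bigr => L _.
  rewrite (eq_bigr (fun _ => ((cnt part (inord L.-1))%:R : R)^-1)); last first.
    by move=> j /eqP ->.
  rewrite (eq_bigl (fun j => j \in [set j | part j == L])); last by move=> j; rewrite inE.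
  by rewrite sumr_const /cnt mulr_natl.
rewrite big_ord_recl /=.
have -> : (inord 0 : 'I_k.+1) = ord0 by apply: val_inj; rewrite /= inordK.
rewrite divff; last first.
  by rewrite pnatr_eq0 -lt0n (cnt_pos he hWS).
rewrite lerD2l.
have -> : k%:R * (powR (n%:R : R) (k%:R^-1) / eps) = \sum_(i < k) (powR (n%:R : R) (k%:R^-1) / eps)
  by rewrite sumr_const card_ord mulr_natl.
apply: ler_sum => i _.
have [hg glk] := inord_pred_lt (lift ord0 i) k1.
have cp := cnt_pos he hWS glk.
have := cnt_ratio (l := lift ord0 i) he k1 hWS isT.
move=> H; rewrite ler_pdivlMr //.
have -> : (inord (0 + i) : 'I_k.+1) = inord (lift ord0 i).-1 by [].
rewrite mulrAC ler_pdivrMr ?ltr0n // mulrC; exact: H.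
Qed.


Theorem theorem3 (R : realType) (eps : R) :
  0 < eps < 1 ->
  exists C : R, 0 < C /\
    forall (k n : nat), (1 <= k)%N ->
    forall (part : 'I_n -> 'I_k.+1) (rk : 'I_n -> {perm 'I_n})
           (v : 'I_n -> 'I_n -> R),
      (forall i j, 0 <= v i j) ->
      (forall i, consistent (rk i) (v i)) ->
      k_WS eps part rk ->
      forall Y : {perm 'I_n}, FMM_output v part rk Y ->
      forall X : {perm 'I_n},
        SW v X <= C * k%:R * powR (n%:R) (k%:R^-1) * SW v Y.
Proof.
move=> he; have [e0 e1] := andP he.
exists (3 / eps); split; first by apply: divr_gt0.
move=> k n k1 part rk v v0 cons hWS Y opt X.
set P := FMM_proxy v part rk.
set A := SW P Y.
have A0 : 0 <= A by apply: sumr_ge0 => i _; exact: proxy_ge0.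
have AY : A <= SW v Y by apply: ler_sum => i _; exact: proxy_le_v.
have hn : (0 < n)%N := n_pos hWS.
set N := powR (n%:R : R) (k%:R^-1).
have N1 : 1 <= N.
  have h1 : (1 : R) <= n%:R by rewrite ler1n.
  have h2 : (0 : R) <= k%:R^-1 by rewrite invr_ge0 ler0n.
  by have := @ler_powR R (n%:R) h1 0 (k%:R^-1) h2; rewrite powRr0.
set c := fun j => ((cnt part (inord (part j).-1))%:R : R).
have step1 : forall a, v a (X a) <= P a (Y a) + A / c (X a).
  move=> a.
  have [_ glk] := inord_pred_lt (part (X a)) k1.
  have cp : 0 < c (X a) by rewrite /c ltr0n (cnt_pos he hWS glk).
  have := agent_bound a (X a) he k1 v0 cons hWS opt.
  rewrite -/P -/A -/(c (X a)) => H.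
  rewrite -(ler_pM2l cp) mulrDr mulrCA mulfV ?mulr1 //; exact: lt0r_neq0.
have step2 : SW v X <= A + A * \sum_j (c j)^-1.
  apply: (@le_trans _ _ (\sum_a (P a (Y a) + A / c (X a)))).
    by apply: ler_sum => a _; exact: step1.
  rewrite big_split /= -/(SW P Y) -/A mulr_sumr.
  rewrite [X in _ <= _ + X](reindex_inj (@perm_inj _ X)) /=.
  done.
have step3 := sum_bound he k1 hWS.
rewrite -/N -/c in step3.
have SY0 : 0 <= SW v Y by apply: sumr_ge0 => i _; exact: v0.
set t := k%:R * (N / eps).
have t1 : 1 <= t.
  rewrite /t; have k1r : (1 : R) <= k%:R by rewrite ler1n.
  have : 1 <= N / eps by rewrite ler_pdivlMr //; lra.
  nra.
have -> : 3 / eps * k%:R * N * SW v Y = 3 * t * SW v Y.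
  by rewrite /t; field; exact: lt0r_neq0.
have s0 : 0 <= \sum_j (c j)^-1.
  by apply: sumr_ge0 => j _; rewrite invr_ge0 /c ler0n.
set S := \sum_j (c j)^-1 in step2 step3 s0.
rewrite -/t in step3.
have p1 : 0 <= A * (1 + t - S) by apply: mulr_ge0 => //; lra.
have p2 : 0 <= (SW v Y - A) * (2 + t) by apply: mulr_ge0; lra.
have p3 : 0 <= SW v Y * (t - 1) by apply: mulr_ge0; lra.
nra.
Qed.
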